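(* Let $D$ be a delta-matroid on $[n,\overline{n}]$ and write $U_D(u,0)=a_n+a_{n-1}u+\dots+a_0u^n$. Then $(a_0,\dots,a_n)$ is the $f$-vector of a pure simplicial complex. In particular, $a_i\le a_{n-i}$ for all $i\le n/2$, and $a_0\le a_1\le\dots\le a_{\lfloor (n+1)/2\rfloor}$.
   Context: Let $[n,\overline{n}]=\{1,\dots,n,\overline{1},\dots,\overline{n}\}$ with involution $a\mapsto\overline{a}$; $\overline{S}=\{\overline{a}:a\in S\}$. A subset is admissible if it contains at most one of $i,\overline{i}$ for each $i$; $\operatorname{AdS}_n$ is the set of admissible subsets. In $\mathbb{R}^n$ set $e_{\overline{i}}=-e_i$, $e_S=\sum_{a\in S}e_a$. A delta-matroid $D$ on $[n,\overline{n}]$ is a nonempty collection $\mathcal{F}$ of admissible sets of size $n$ (feasible sets) such that $\operatorname{Conv}\{e_B:B\in\mathcal{F}\}$ has all edges parallel to some $e_i$ or $e_i\pm e_j$. Rank function: $g_D(S)=\max_{B\in\mathcal{F}}(|S\cap B|-|\overline{S}\cap B|)$. $U_D(u,v)=\sum_{S\in\operatorname{AdS}_n}u^{n-|S|}v^{(|S|-g_D(S))/2}$. The $f$-vector of a simplicial complex of dimension $n-1$ is $(f_{-1},f_0,\dots,f_{n-1})$, $f_i$ the number of $i$-dimensional faces (faces with $i+1$ vertices); a simplicial complex is pure if all its facets have the same dimension. *)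

(* Defs.v *)
From HB Require Import structures.
From mathcomp Require Import all_boot all_order all_algebra.
From mathcomp Require Import Rstruct.
From Stdlib Require Rdefinitions.
Notation R := Rdefinitions.R.
Set Implicit Arguments. Unset Strict Implicit. Unset Printing Implicit Defensive.
Import Order.TTheory GRing.Theory Num.Theory.
Local Open Scope ring_scope.

(* Ground set [n, nbar]: (i, false) encodes i, (i, true) encodes ibar. *)
Definition elt (n : nat) := ('I_n * bool)%type.
Definition bar {n} (a : elt n) : elt n := (a.1, ~~ a.2).
Definition barS {n} (S : {set elt n}) : {set elt n} := [set bar a | a in S].

Definition admissible {n} (S : {set elt n}) : bool :=
  [forall i : 'I_n, ~~ (((i, false) \in S) && ((i, true) \in S))].

Definition unitv n (i : 'I_n) : 'rV[R]_n := \row_j (if j == i then 1 else 0).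
Definition e_elt {n} (a : elt n) : 'rV[R]_n :=
  if a.2 then - unitv a.1 else unitv a.1.
Definition e_set {n} (S : {set elt n}) : 'rV[R]_n := \sum_(a in S) e_elt a.

Definition dotv {n} (c x : 'rV[R]_n) : R := \sum_j c 0 j * x 0 j.

(* [p, q] (p <> q, p q in P) is an edge of Conv P, P finite: the segment
   conv{p,q} is an exposed face, i.e. for some linear functional c the points
   of P maximizing c are exactly points of the segment [p, q]
   (so the face conv(argmax) is the segment [p,q]). *)
Definition is_edge {n} (P : seq 'rV[R]_n) (p q : 'rV[R]_n) : Prop :=
  p \in P /\ q \in P /\ p <> q /\
  exists c : 'rV[R]_n,
    dotv c p = dotv c q /\
    (forall x : 'rV[R]_n, x \in P -> dotv c x <= dotv c p) /\
    (forall x : 'rV[R]_n, x \in P -> dotv c x = dotv c p ->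
       exists t : R, 0 <= t <= 1 /\ x = (1 - t) *: p + t *: q).

Definition parallel {n} (x y : 'rV[R]_n) : Prop := exists t : R, x = t *: y.

Definition delta_matroid {n} (F : {set {set elt n}}) : Prop :=
  F != set0 /\
  (forall B : {set elt n}, B \in F -> admissible B /\ #|B| = n) /\
  (forall p q : 'rV[R]_n, is_edge [seq e_set B | B <- enum F] p q ->
     exists i j : 'I_n,
       parallel (q - p) (unitv i) \/
       parallel (q - p) (unitv i + unitv j) \/
       parallel (q - p) (unitv i - unitv j)).

Definition gval {n} (S B : {set elt n}) : int :=
  (#|S :&: B|%:Z - #|barS S :&: B|%:Z).
Definition rankD {n} (F : {set {set elt n}}) (S : {set elt n}) : int :=
  \big[Num.max/gval S (odflt set0 [pick B in F])]_(B in F) gval S B.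

Definition U_D {n} (F : {set {set elt n}}) (K : comNzRingType) (u v : K) : K :=
  \sum_(S : {set elt n} | admissible S)
     u ^+ (n - #|S|) * v ^+ ((absz (#|S|%:Z - rankD F S)) %/ 2).

Definition U_D_u0 {n} (F : {set {set elt n}}) : {poly int} := U_D F 'X 0.
Definition acoef {n} (F : {set {set elt n}}) (k : nat) : int := (U_D_u0 F)`_(n - k).

Definition simplicial_complex {m} (D : {set {set 'I_m}}) : Prop :=
  set0 \in D /\ (forall X Y : {set 'I_m}, X \in D -> Y \subset X -> Y \in D).
Definition facet {m} (D : {set {set 'I_m}}) (X : {set 'I_m}) : Prop :=
  X \in D /\ (forall Y : {set 'I_m}, Y \in D -> X \subset Y -> Y = X).
Definition pure {m} (D : {set {set 'I_m}}) : Prop :=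
  forall X Y : {set 'I_m}, facet D X -> facet D Y -> #|X| = #|Y|.
(* number of faces with k vertices, i.e. f_{k-1} *)
Definition nfaces {m} (D : {set {set 'I_m}}) (k : nat) : nat :=
  #|[set X in D | #|X| == k]|.
(* (a_0,...,a_n) is the f-vector (f_{-1},...,f_{n-1}) of D, D of dimension n-1 *)
Definition is_fvector_of {m} (D : {set {set 'I_m}}) (n : nat) (a : nat -> int) : Prop :=
  (forall X : {set 'I_m}, X \in D -> (#|X| <= n)%N) /\
  (forall k, (k <= n)%N -> (nfaces D k)%:Z = a k).

(* Main.v *)
Require Import Defs.
From HB Require Import structures.
From mathcomp Require Import all_boot all_order all_algebra.
Import Order.TTheory GRing.Theory Num.Theory.
From mathcomp Require Import zify.
Set Implicit Arguments. Unset Strict Implicit. Unset Printing Implicit Defensive.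
Section Comb.
Variables (T : finType) (n : nat) (FF : {set {set T}}).
Hypothesis FFsz : forall B, B \in FF -> #|B| = n.

Definition faces := [set S : {set T} | [exists B in FF, S \subset B]].
Definition fa k := #|[set S in faces | #|S| == k]|.

Lemma face_sub (X Y : {set T}) : Y \in faces -> X \subset Y -> X \in faces.
Proof.
rewrite !inE => /existsP[B /andP[BF YB]] XY; apply/existsP; exists B.
by rewrite BF (subset_trans XY YB).
Qed.

Lemma fa_mono i j : i <= j -> i + j <= n -> fa i <= fa j.
Proof.
move=> lij lijn.
pose A := [set S in faces | #|S| == i].
pose C := [set S in faces | #|S| == j].
pose E := \sum_(X in A) \sum_(Y in C) (X \subset Y : nat).
have E1 : E = fa j * 'C(j, i).
  rewrite /E exchange_big /= /fa -/C -sum_nat_const; apply: eq_bigr => Y.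
  rewrite inE => /andP[Yf /eqP <-].
  rewrite -cards_draws -sum1_card [RHS]big_mkcond /=.
  rewrite [LHS]big_mkcond /=; apply: eq_bigr => X _.
  rewrite !inE; case XY: (X \subset Y) => /=; last by case: ifP.
  by have := face_sub Yf XY; rewrite inE => ->.
have E2 : fa i * 'C(n - i, j - i) <= E.
  rewrite /E /fa -/A -sum_nat_const; apply: leq_sum => W.
  rewrite inE => /andP[/[dup] Xf]; rewrite inE => /existsP[B /andP[BF XB]] /eqP Xi.
  pose Z := [set Z : {set T} | Z \subset B :\: W & #|Z| == j - i].
  have -> : 'C(n - i, j - i) = #|[set W :|: Z0 | Z0 in Z]|.
    rewrite card_in_imset; first by rewrite cards_draws cardsD (setIidPr XB) Xi FFsz.
    move=> Z1 Z2; rewrite !inE => /andP[Z1s _] /andP[Z2s _] e.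
    apply/setP => x; move/setP: e => /(_ x); rewrite !inE.
    case xW: (x \in W) => /=.
      have h1 : (x \in Z1) = false by apply/negP => /(subsetP Z1s); rewrite inE xW.
      have h2 : (x \in Z2) = false by apply/negP => /(subsetP Z2s); rewrite inE xW.
      by rewrite h1 h2.
    by [].
  have -> : \sum_(Y in C) (W \subset Y : nat) = \sum_(Y in C | W \subset Y) 1.
    by rewrite big_mkcondr; apply: eq_bigr => Y _; case: (W \subset Y).
  rewrite sum1_card; apply: subset_leq_card; apply/subsetP => Y /imsetP[Z0 Z0in ->].
  move: Z0in; rewrite !inE => /andP[Z0s /eqP Z0c].
  rewrite unfold_in inE subsetUl andbT inE; apply/andP; split.
    apply/existsP; exists B; rewrite BF subUset XB.
    by apply: subset_trans Z0s (subsetDl _ _).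
  rewrite cardsU Z0c Xi.
  have -> : W :&: Z0 = set0.
    apply/setP => x; rewrite !inE; apply/negP => /andP[xW xZ].
    by move: (subsetP Z0s x xZ); rewrite !inE xW.
  rewrite cards0 subn0; apply/eqP; lia.

have c1 : 'C(j, i) <= 'C(n - i, j - i).
  by rewrite -bin_sub // leq_bin2l //; lia.
have c0 : 0 < 'C(n - i, j - i) by rewrite bin_gt0; lia.
rewrite -(leq_pmul2r c0); apply: leq_trans E2 _; rewrite E1 leq_mul2l c1 orbT //.
Qed.

Hypothesis FFn0 : FF != set0.
Let m := #|T|.
Definition Dc := [set X : {set 'I_m} | (enum_val @: X) \in faces].

Lemma ev_rk (S : {set T}) : enum_val @: (enum_rank @: S) = S.
Proof. by rewrite -imset_comp (eq_imset _ (@enum_rankK T)) imset_id. Qed.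

Lemma rk_ev (X : {set 'I_m}) : enum_rank @: (enum_val @: X) = X.
Proof. by rewrite -imset_comp (eq_imset _ (@enum_valK T)) imset_id. Qed.

Lemma card_ev (X : {set 'I_m}) : #|enum_val @: X| = #|X|.
Proof. by rewrite card_imset //; apply: enum_val_inj. Qed.

Lemma Dc_cx : set0 \in Dc /\ (forall X Y : {set 'I_m}, X \in Dc -> Y \subset X -> Y \in Dc).
Proof.
split.
  rewrite inE imset0 inE; case/set0Pn: FFn0 => B BF; apply/existsP; exists B.
  by rewrite BF sub0set.
move=> X Y; rewrite inE => Xf YX; rewrite inE; apply: face_sub Xf _; exact: imsetS.
Qed.

Lemma Dc_facet (X : {set 'I_m}) : X \in Dc ->
  (forall Y : {set 'I_m}, Y \in Dc -> X \subset Y -> Y = X) -> #|X| = n.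
Proof.
move=> XD Xmax; move: (XD); rewrite !inE => /existsP[B /andP[BF XB]].
have YD : enum_rank @: B \in Dc.
  by rewrite inE ev_rk inE; apply/existsP; exists B; rewrite BF subxx.
have XY : X \subset enum_rank @: B.
  by rewrite -(rk_ev X); apply: imsetS.
by rewrite -(Xmax _ YD XY) card_imset ?FFsz //; apply: enum_rank_inj.
Qed.

Lemma Dc_le (X : {set 'I_m}) : X \in Dc -> #|X| <= n.
Proof.
rewrite !inE => /existsP[B /andP[BF XB]].
by rewrite -card_ev -(FFsz BF) subset_leq_card.
Qed.

Lemma Dc_nf k : #|[set X in Dc | #|X| == k]| = fa k.
Proof.
rewrite /fa -(card_imset _ (@imset_inj _ _ _ (@enum_val_inj T T))).
apply: eq_card => S; rewrite !inE.
apply/imsetP/andP => [[X] | [Sf Sk]].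
  by rewrite !inE => /andP[XD Xk] ->; split => //; rewrite card_ev.
exists (enum_rank @: S); last by rewrite ev_rk.
rewrite !inE ev_rk Sf card_imset ?Sk //; apply: enum_rank_inj.
Qed.

End Comb.
Local Open Scope ring_scope.
Section W.
Variable n : nat.

Lemma adm_card (S : {set elt n}) : admissible S -> (#|S| <= n)%N.
Proof.
move=> /forallP adm.
rewrite -(@card_in_imset _ _ (fun a : elt n => a.1)).
  by rewrite -[X in (_ <= X)%N](card_ord n) max_card.
move=> [i b] [i' b'] aS bS /= e; subst i'.
case: b b' aS bS => [] [] // aS bS; have := adm i; by rewrite aS bS.
Qed.

Lemma cover (B : {set elt n}) : admissible B -> #|B| = n ->
  forall i : 'I_n, ((i, false) \in B) || ((i, true) \in B).
Proof.
move=> admB cB i; apply/negPn/negP; rewrite negb_or => /andP[h1 h2].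
have : (#|B| <= n.-1)%N.
  rewrite -(@card_in_imset _ _ (fun a : elt n => a.1)).
    rewrite -[n in n.-1]card_ord -(cardsC1 i); apply: subset_leq_card.
    apply/subsetP => j /imsetP[[i' b] ab ->]; rewrite !inE /=.
    by apply/eqP => e; subst i'; case: b ab; [rewrite (negbTE h2) | rewrite (negbTE h1)].
  move=> [i1 b] [i' b'] aS bS /= e; subst i'.
  move/forallP: admB => adm.
  case: b b' aS bS => [] [] // aS bS; have := adm i1; by rewrite aS bS.
rewrite cB; case: n i {h1 h2 cB} => [[]|k] //= _; lia.
Qed.
End W.
Section W2.
Variables (n : nat) (F : {set {set elt n}}).
Hypothesis Fn0 : F != set0.
Hypothesis Fok : forall B, B \in F -> admissible B /\ #|B| = n.

Lemma gval_le (S B : {set elt n}) : gval S B <= #|S|%:Z.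
Proof.
rewrite /gval; have := subset_leq_card (subsetIl S B).
move: #|S :&: B| #|barS S :&: B| => a b; rewrite -lez_nat => h.
by rewrite lerBlDr (le_trans h) // lerDl.
Qed.

Lemma rankD_le (S : {set elt n}) (x : int) :
  (forall B, B \in F -> gval S B <= x) -> rankD F S <= x.
Proof.
move=> h; rewrite /rankD; apply: bigmax_le => //.
case: pickP => [B BF|none] /=; first exact: h.
by case/set0Pn: Fn0 => B; rewrite none.
Qed.

Lemma rank_face (S : {set elt n}) : admissible S ->
  ((absz (#|S|%:Z - rankD F S) %/ 2)%N == 0%N) = (S \in faces F).
Proof.
move=> admS; rewrite inE.
case: existsP => [[B /andP[BF SB]] | nf].
  have gB : gval S B = #|S|%:Z.
    rewrite /gval (setIidPl SB).
    suff -> : barS S :&: B = set0 by rewrite cards0 subr0.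
    apply/setP => x; rewrite !inE; apply/negP => /andP[/imsetP[a aS ->] bB].
    have aB := subsetP SB a aS.
    have [/forallP admB _] := Fok BF.
    move: (admB a.1); case: a {aS} aB bB => i [] /= -> -> //.
  have -> : rankD F S = #|S|%:Z.
    apply/eqP; rewrite eq_le; apply/andP; split.
      by apply: rankD_le => B' _; apply: gval_le.
    by rewrite /rankD -gB; apply: le_bigmax_cond.
  by rewrite subrr.
have h : rankD F S <= #|S|%:Z - 2.
  apply: rankD_le => B BF.
  have [admB cB] := Fok BF.
  have : ~~ (S \subset B) by apply/negP => SB; apply: nf; exists B; rewrite BF SB.
  case/subsetPn => a aS aB.
  have baB : bar a \in B.
    have := cover admB cB a.1; case: a aS aB => i [] _ /= /negbTE -> //; by rewrite orbF.
  have h1 : (#|S :&: B| < #|S|)%N.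
    apply: proper_card; apply/properP; split; first exact: subsetIl.
    by exists a => //; rewrite inE (negbTE aB) andbF.
  have h2 : (0 < #|barS S :&: B|)%N.
    by rewrite card_gt0; apply/set0Pn; exists (bar a); rewrite !inE baB andbT imset_f.
  rewrite /gval; lia.
move: h; move: (rankD F S) => r h.
lia.
Qed.
End W2.
Section W3.
Variables (n : nat) (F : {set {set elt n}}).
Hypothesis Fn0 : F != set0.
Hypothesis Fok : forall B, B \in F -> admissible B /\ #|B| = n.

Lemma xx : True. Proof. by []. Qed.
Lemma acoef_fa k : (k <= n)%N -> acoef F k = (fa F k)%:R.
Proof.
move=> kn; rewrite /acoef /U_D_u0 /U_D coef_sum.
rewrite (eq_bigr (fun S => ((S \in [set S in faces F | #|S| == k]) : nat)%:R)).
  rewrite -natr_sum /fa -sum1_card big_mkcond [in RHS]big_mkcond /=; congr (_ %:R).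
  apply: eq_bigr => S _; case: ifP => // /negbT nadm.
  rewrite inE; case Sf: (S \in faces F) => //=; exfalso.
  move: Sf; rewrite inE => /existsP[B /andP[BF SB]].
  have [/forallP admB _] := Fok BF.
  move/negP: nadm; apply; apply/forallP => i; apply/negP => /andP[h1 h2].
  by have := admB i; rewrite (subsetP SB _ h1) (subsetP SB _ h2).
move=> S admS; rewrite expr0n rank_face //.
rewrite inE; case: (S \in faces F) => /=; last by rewrite mulr0 coef0.
rewrite mulr1 coefXn; congr (nat_of_bool _)%:R.
have hS := adm_card admS; by rewrite eqn_sub2lE // eq_sym.
Qed.
End W3.

Theorem corollary3p5 (n : nat) (F : {set {set elt n}}) :
  delta_matroid F ->
  (exists (m : nat) (D : {set {set 'I_m}}),
      simplicial_complex D /\ pure D /\ is_fvector_of D n (acoef F)) /\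
  (forall i : nat, (i.*2 <= n)%N -> acoef F i <= acoef F (n - i)) /\
  (forall i j : nat, (i <= j <= (n.+1)./2)%N -> acoef F i <= acoef F j).
Proof.
move=> [Fn0 [Fok _]].
have Fsz : forall B, B \in F -> #|B| = n by move=> B /Fok[].
split.
  eexists; exists (Dc F); split; first exact: Dc_cx Fn0.
  split.
    by move=> X Y [XD Xm] [YD Ym]; rewrite (Dc_facet Fsz XD Xm) (Dc_facet Fsz YD Ym).
  split; first by move=> X; apply: Dc_le.
  by move=> k kn; rewrite /nfaces Dc_nf (acoef_fa Fn0 Fok kn) natz.
split.
  move=> i hi; rewrite -muln2 in hi; rewrite (acoef_fa Fn0 Fok) ?(acoef_fa Fn0 Fok); try lia.
  rewrite ler_nat; apply: (fa_mono Fsz); lia.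
move=> i j /andP[lij ljh].
have hh := odd_double_half n.+1; rewrite -muln2 in hh.
have [->|neq] := eqVneq i j; first by rewrite lexx.
rewrite (acoef_fa Fn0 Fok) ?(acoef_fa Fn0 Fok); try lia.
rewrite ler_nat; apply: (fa_mono Fsz); lia.
Qed.
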